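(* Take $g_k(x)=|x|$ for all $k$, and assume (H1) and (H2) for $(X_1,\ldots,X_d)$ and for the aggregated vector below. Let $CR\subseteq\{1,\ldots,d\}$ be a set of $r\le d$ indices such that the risks $(X_k)_{k\in CR}$ are comonotonic. Let $(u_1,\ldots,u_d)=A_{X_1,\ldots,X_d}(u)$. Then the optimal allocation of $u$ for the vector consisting of the risks $X_i$, $i\in\{1,\ldots,d\}\setminus CR$, together with the single aggregated risk $\sum_{k\in CR}X_k$, is $A_{(X_i)_{i\notin CR},\,\sum_{k\in CR}X_k}(u)=\big((u_i)_{i\notin CR},\ \sum_{k\in CR}u_k\big)$.
   Context: For a vector $\mathbf Y=(Y_1,\ldots,Y_m)$ of nonnegative random variables and capital $u\ge0$, $\mathcal{U}^m_u=\{v\in[0,u]^m:\sum_k v_k=u\}$ and $I_{\mathbf Y}(v)=\sum_{k=1}^m\mathbb{E}[g_k(v_k-Y_k)\mathbf 1_{\{Y_k>v_k\}}\mathbf 1_{\{\sum_l Y_l\le u\}}]$; with $g_k(x)=|x|$ this is $\sum_k\mathbb{E}[(Y_k-v_k)^+\mathbf 1_{\{\sum_l Y_l\le u\}}]$. (H1): $I_{\mathbf Y}$ has a unique minimizer on $\mathcal{U}^m_u$, denoted $A_{Y_1,\ldots,Y_m}(u)$ (the optimal allocation). (H2): the $g_k$ are differentiable, the relevant $g_k'(v_k-Y_k)$ are integrable, and each pair $(Y_k,\sum_l Y_l)$ has a joint density. Random variables $(Z_1,\ldots,Z_n)$ are comonotonic if there exist a random variable $W$ and non-decreasing functions $\varphi_1,\ldots,\varphi_n$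 with $(Z_1,\ldots,Z_n)\overset{d}{=}(\varphi_1(W),\ldots,\varphi_n(W))$. *)

(* Defs.v *)
From HB Require Import structures.
From mathcomp Require Import all_boot all_order all_algebra.
From mathcomp Require Import all_classical all_reals all_analysis.
Set Implicit Arguments. Unset Strict Implicit. Unset Printing Implicit Defensive.
Import Order.TTheory GRing.Theory Num.Theory.
Import numFieldNormedType.Exports.
Local Open Scope classical_set_scope.
Local Open Scope ring_scope.

Section Alloc.
Context {R : realType} {dT : measure_display} {T : measurableType dT}
  (P : probability T R).

Definition simplexU (m : nat) (u : R) : set ('I_m -> R) :=
  [set v | (forall k, 0 <= v k <= u) /\ \sum_(k : 'I_m) v k = u].

Definition Ifun (m : nat) (g : 'I_m -> R -> R) (Y : 'I_m -> T -> R) (u : R)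
  (v : 'I_m -> R) : \bar R :=
  (\sum_(k : 'I_m) \int[P]_x
     (g k (v k - Y k x) * (if v k < Y k x then 1 else 0)
      * (if \sum_(l : 'I_m) Y l x <= u then 1 else 0))%:E)%E.

Definition is_min_alloc (m : nat) (g : 'I_m -> R -> R) (Y : 'I_m -> T -> R)
  (u : R) (v : 'I_m -> R) : Prop :=
  simplexU u v /\ forall w, simplexU u w -> (Ifun g Y u v <= Ifun g Y u w)%E.

Definition H1 (m : nat) (g : 'I_m -> R -> R) (Y : 'I_m -> T -> R) (u : R) : Prop :=
  exists v, is_min_alloc g Y u v /\ forall w, is_min_alloc g Y u w -> w = v.

Definition has_joint_density (Y S : T -> R) : Prop :=
  exists f : R * R -> R, measurable_fun setT f /\ (forall z, 0 <= f z) /\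
    forall A : set (R * R), measurable A ->
      P ((fun x => (Y x, S x)) @^-1` A) =
      (\int[(@lebesgue_measure R \x @lebesgue_measure R)%E]_(z in A) (f z)%:E)%E.

Definition H2abs (m : nat) (Y : 'I_m -> T -> R) : Prop :=
  forall k, has_joint_density (Y k) (fun x => \sum_(l : 'I_m) Y l x).

(* (Z_k)_{k in I} comonotonic: there are a random variable W (on some probability
   space) and nondecreasing phi_k with (Z_k)_{k in I} =d (phi_k(W))_{k in I};
   equality in distribution of random vectors = equality of joint CDFs. *)
Definition comonotonic (n : nat) (I : {set 'I_n}) (Z : 'I_n -> T -> R) : Prop :=
  exists (d' : measure_display) (T' : measurableType d') (P' : probability T' R)
    (W : T' -> R) (phi : 'I_n -> R -> R),
    measurable_fun setT W /\
    (forall k, k \in I -> {homo phi k : a b / a <= b}) /\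
    forall t : 'I_n -> R,
      P [set x | forall k, k \in I -> Z k x <= t k] =
      P' [set y | forall k, k \in I -> phi k (W y) <= t k].

End Alloc.

Definition gabs {R : realType} (m : nat) : 'I_m -> R -> R := fun _ x => `|x|.

(* the vector ((X_i)_{i notin CR}, sum_{k in CR} X_k), indexed by 'I_(#|~:CR|).+1,
   the non-CR indices listed in increasing order, the aggregate last *)
Definition aggr {A : Type} (addA : A -> A -> A) (zeroA : A) (d : nat)
  (CR : {set 'I_d}) (X : 'I_d -> A) : 'I_(#|~: CR|).+1 -> A :=
  fun i => match unlift ord_max i with
           | Some j => X (enum_val j)
           | None => \big[addA/zeroA]_(k in CR) X k
           end.
Arguments aggr {A} addA zeroA {d} CR X _.

(* Main.v *)
Require Import Defs.
From HB Require Import structures.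
From mathcomp Require Import all_boot all_order all_algebra.
From mathcomp Require Import all_classical all_reals all_analysis.
From mathcomp Require Import measurable_realfun.
From mathcomp Require Import ring lra.
Import Order.TTheory GRing.Theory Num.Theory.
Local Open Scope classical_set_scope.
Local Open Scope ring_scope.

Lemma sum_sup_le (R : realType) (n : nat) (C : {set 'I_n}) (g : 'I_n -> R -> R)
  (A : set R) (a0 U c : R) :
  A a0 ->
  (forall k w, k \in C -> g k w <= U) ->
  (forall w1 w2, A w1 -> A w2 -> exists2 w3, A w3 &
     forall k, k \in C -> g k w1 <= g k w3 /\ g k w2 <= g k w3) ->
  (forall w, A w -> \sum_(k in C) g k w <= c) ->
  \sum_(k in C) sup [set g k w | w in A] <= c.
Proof.
move=> Aa0 gU dir hc.
have hs k : k \in C -> has_sup [set g k w | w in A].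
  move=> kC; split; first by exists (g k a0), a0.
  by exists U => _ [w _ <-]; apply: gU.
apply/ler_addgt0Pr => e e0.
set m := #|C|.
pose eps := e / (m%:R + 1).
have m1 : 0 < m%:R + 1 :> R by rewrite ltr_wpDl.
have eps0 : 0 < eps by rewrite divr_gt0.
have meps : m%:R * eps + eps = e.
  by rewrite /eps -[X in _ + X]mul1r -mulrDl mulrC mulfVK // gt_eqF.
have key : forall s : seq 'I_n, {subset s <= C} -> exists2 w, A w &
    forall k, k \in s -> sup [set g k w | w in A] - eps <= g k w.
  elim=> [|k s IH] sub; first by exists a0.
  have [w Aw hw] := IH (fun x xs => sub x (mem_behead (s:=k :: s) xs)).
  have kC : k \in C by apply: sub; rewrite inE eqxx.
  have [_ [w1 Aw1 <-] hw1] := sup_adherent eps0 (hs k kC).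
  have [w3 Aw3 h3] := dir w w1 Aw Aw1.
  exists w3 => // k'; rewrite inE => /orP[/eqP->|k's].
    by apply: le_trans (ltW hw1) _; case: (h3 k kC).
  apply: le_trans (hw k' k's) _.
  by case: (h3 k' (sub k' (mem_behead (s:=k::s) k's))).
have [w Aw hw] : exists2 w, A w & forall k, k \in enum C -> sup [set g k w | w in A] - eps <= g k w by apply: key => x; rewrite mem_enum.
have : \sum_(k in C) (sup [set g k w | w in A] - eps) <= c.
  apply: le_trans (hc w Aw); apply: ler_sum => k kC; apply: hw.
  by rewrite mem_enum.
rewrite sumrB sumr_const -/m => h.
have : (eps *+ m) = m%:R * eps by rewrite mulr_natl.
lra.
Qed.

Lemma split_exists (R : realType) (n : nat) (C : {set 'I_n})
  (delta : 'I_n -> R -> R) (u s : R) :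
  (forall k, k \in C -> {homo delta k : a b / a <= b}) ->
  (forall k x, 0 <= delta k x <= u) ->
  (0 < #|C|)%N -> 0 <= s <= u ->
  exists v : 'I_n -> R, (forall k, 0 <= v k <= u) /\ \sum_(k in C) v k = s /\
   forall w, (forall k, k \in C -> delta k w <= v k) \/
             (forall k, k \in C -> v k <= delta k w).
Proof.
move=> hom dB Cn0 /andP[s0 su]; have u0 : 0 <= u := le_trans s0 su.
pose f w := \sum_(k in C) delta k w.
have fhom : {homo f : a b / a <= b}.
  by move=> a b ab; apply: ler_sum => k kC; apply: hom.
pose A := [set w | f w <= s].
pose B := [set w | s < f w].
pose lo k := if `[< exists a, A a >] then sup [set delta k w | w in A] else 0.
pose hi k := if `[< exists b, B b >] then u - sup [set u - delta k w | w in B] else u.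
have hsA k : (exists a, A a) -> has_sup [set delta k w | w in A].
  move=> [a Aa]; split; first by exists (delta k a), a.
  by exists u => _ [w _ <-]; case/andP: (dB k w).
have hsB k : (exists b, B b) -> has_sup [set u - delta k w | w in B].
  move=> [a Aa]; split; first by exists (u - delta k a), a.
  by exists u => _ [w _ <-]; case/andP: (dB k w) => h _; rewrite lerBlDr lerDl.
have F1 k w : A w -> delta k w <= lo k.
  move=> Aw; rewrite /lo; case: asboolP => [h|[]]; last by exists w.
  by apply: sup_upper_bound; [apply: hsA; exists w | exists w].
have F2 k w : B w -> hi k <= delta k w.
  move=> Bw; rewrite /hi; case: asboolP => [h|[]]; last by exists w.
  rewrite lerBlDl -lerBlDr; apply: sup_upper_bound; [by apply: hsB; exists w | by exists w].
have F3 k : 0 <= lo k <= u.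
  rewrite /lo; case: asboolP => [[a Aa]|_]; last by rewrite lexx (le_trans s0 su).
  apply/andP; split.
    apply: le_trans (sup_upper_bound (hsA k (ex_intro _ a Aa)) (ex_intro2 _ _ a Aa erefl)); by case/andP: (dB k a).
  apply: ge_sup; first by exists (delta k a), a.
  by move=> _ [w _ <-]; case/andP: (dB k w).
have F5 k : 0 <= hi k <= u.
  rewrite /hi; case: asboolP => [[a Aa]|_]; last by rewrite lexx (le_trans s0 su).
  apply/andP; split.
    rewrite subr_ge0; apply: ge_sup; first by exists (u - delta k a), a.
    by move=> _ [w _ <-]; case/andP: (dB k w) => h _; rewrite lerBlDr lerDl.
  rewrite lerBlDr lerDl; apply: le_trans (sup_upper_bound (hsB k (ex_intro _ a Aa)) (ex_intro2 _ _ a Aa erefl)).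
  by case/andP: (dB k a) => _ h; rewrite subr_ge0.
have AB a b : A a -> B b -> a <= b.
  move=> Aa Bb; rewrite leNgt; apply/negP => ba.
  have := fhom _ _ (ltW ba); rewrite /A /B /= in Aa Bb; lra.
have F4 k : k \in C -> lo k <= hi k.
  move=> kC; rewrite /lo; case: asboolP => [[a Aa]|_]; last by case/andP: (F5 k).
  rewrite /hi; case: asboolP => [[b Bb]|_]; last by apply: ge_sup; [exists (delta k a), a | move=> _ [w _ <-]; case/andP: (dB k w)].
  rewrite lerBrDl -lerBrDr; apply: ge_sup; first by exists (u - delta k b), b.
  move=> _ [w Bw <-]; rewrite lerD2l lerN2.
  apply: ge_sup; first by exists (delta k a), a.
  by move=> _ [w' Aw' <-]; apply: hom => //; apply: AB.
have F6 : \sum_(k in C) lo k <= s.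
  rewrite /lo; case: asboolP => [[a Aa]|_]; last by rewrite big1.
  apply: (@sum_sup_le R n C _ A a u) => //.
  - by move=> k w _; case/andP: (dB k w).
  - move=> w1 w2 A1 A2; exists (Order.max w1 w2).
      by rewrite /Order.max; case: ifP.
    by move=> k kC; split; apply: hom => //; rewrite ?le_max lexx ?orbT.
have Cge1 : (1 <= #|C|)%N by [].
have F7 : s <= \sum_(k in C) hi k.
  rewrite /hi; case: asboolP => [[b Bb]|_]; last first.
    rewrite sumr_const -(subnKC Cge1) add1n mulrS; apply: le_trans su _.
    by rewrite lerDl mulrn_wge0 // u0.
  rewrite sumrB sumr_const lerBrDr -lerBrDl.
  have -> : u *+ #|C| - s = (u *+ #|C| - s) by [].
  apply: (@sum_sup_le R n C _ B b u) => //.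
  - by move=> k w _; case/andP: (dB k w) => h _; rewrite lerBlDr lerDl.
  - move=> w1 w2 B1 B2; exists (Order.min w1 w2).
      by rewrite /Order.min; case: ifP.
    by move=> k kC; split; rewrite lerD2l lerN2; apply: hom => //; rewrite ?ge_min lexx ?orbT.
  move=> w Bw; rewrite sumrB sumr_const; rewrite /B /= in Bw.
  rewrite -/(f w); lra.
pose SL := \sum_(k in C) lo k.
pose SH := \sum_(k in C) hi k.
pose lam := if SH - SL == 0 then 0 else (s - SL) / (SH - SL).
have lam01 : 0 <= lam <= 1.
  rewrite /lam; case: eqP => [_|h]; first by rewrite lexx ler01.
  have hp : 0 < SH - SL by rewrite lt_def; apply/andP; split; [apply/eqP|rewrite /SH /SL; lra].
  apply/andP; split; first by apply: divr_ge0; [rewrite subr_ge0; exact: F6 | exact: ltW].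
  by rewrite ler_pdivrMr // mul1r /SH /SL; lra.
exists (fun k => if k \in C then lo k + lam * (hi k - lo k) else 0).
split.
  move=> k; case: ifP => kC; last by rewrite lexx; case/andP: (F3 k).
  have := F4 k kC; case/andP: (F3 k); case/andP: (F5 k); case/andP: lam01 => l0 l1 h1 h2 h3 h4 h5.
  have : 0 <= lam * (hi k - lo k) <= hi k - lo k.
    rewrite mulr_ge0 ?subr_ge0 //= ler_piMl ?subr_ge0 //.
  move=> /andP[]; lra.
split.
  rewrite (eq_bigr (fun k => lo k + lam * (hi k - lo k))); last by move=> k ->.
  rewrite big_split /= -mulr_sumr sumrB -/SL -/SH /lam.
  case: eqP => [h|h]; first by rewrite mul0r addr0; rewrite /SH /SL in h F6 F7 *; lra.
  by rewrite divfK; [rewrite addrC subrK | apply/eqP].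
move=> w; case: (leP (f w) s) => fw; [left|right] => k kC; rewrite kC.
  apply: le_trans (F1 k w fw) _.
  have := F4 k kC; case/andP: lam01 => l0 _ h; rewrite lerDl mulr_ge0 // subr_ge0 //.
apply: le_trans (F2 k w fw).
have := F4 k kC; case/andP: lam01 => _ l1 h.
rewrite -lerBrDl ler_piMl // subr_ge0 //.
Qed.

Module ClampM.
Set Implicit Arguments. Unset Strict Implicit.

Section Clamp.
Variable R : realDomainType.
Definition clamp (u x : R) := Num.min (Num.max x 0) u.

Lemma clamp_homo (u : R) : {homo clamp u : a b / a <= b}.
Proof.
move=> a b ab; rewrite /clamp !maxEle !minEle.
by repeat case: ifP; move=> *; lra.
Qed.

Lemma clamp_bnd (u x : R) : 0 <= u -> 0 <= clamp u x <= u.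
Proof.
move=> u0; rewrite /clamp ge_min lexx orbT andbT le_min u0 andbT.
by rewrite le_max lexx orbT.
Qed.

Lemma clamp_id (u x : R) : 0 <= x -> x <= u -> clamp u x = x.
Proof. by move=> x0 xu; rewrite /clamp (max_l x0) (min_l xu). Qed.

Lemma clamp_le (u x b : R) : 0 <= b -> x <= b -> clamp u x <= b.
Proof.
move=> b0 xb; rewrite /clamp ge_min; apply/orP; left.
by rewrite ge_max xb b0.
Qed.
End Clamp.

End ClampM.
Import ClampM.


Lemma aggr_lift {A : Type} (addA : A -> A -> A) (zeroA : A) (d : nat)
  (CR : {set 'I_d}) (Xf : 'I_d -> A) (j : 'I_#|~: CR|) :
  aggr addA zeroA CR Xf (lift ord_max j) = Xf (enum_val j).
Proof. by rewrite /aggr liftK. Qed.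

Lemma aggr_max {A : Type} (addA : A -> A -> A) (zeroA : A) (d : nat)
  (CR : {set 'I_d}) (Xf : 'I_d -> A) :
  aggr addA zeroA CR Xf ord_max = \big[addA/zeroA]_(k in CR) Xf k.
Proof. by rewrite /aggr unlift_none. Qed.

Lemma big_ord_lift {V : Type} {idx : V} (op : Monoid.law idx) (n : nat)
  (F : 'I_n.+1 -> V) :
  \big[op/idx]_(i < n.+1) F i =
  op (\big[op/idx]_(j < n) F (lift ord_max j)) (F ord_max).
Proof.
rewrite big_ord_recr; apply: congr2 => //; apply: eq_bigr => j _; congr F.
by apply: val_inj; rewrite /= /bump leqNgt ltn_ord.
Qed.

Lemma big_split_CR {V : Type} {idx : V} (op : Monoid.com_law idx) (d : nat)
  (CR : {set 'I_d}) (F : 'I_d -> V) :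
  \big[op/idx]_(k < d) F k =
  op (\big[op/idx]_(j < #|~: CR|) F (enum_val j)) (\big[op/idx]_(k in CR) F k).
Proof.
rewrite -big_enum_val [LHS](bigID (mem CR)) /= [in LHS]Monoid.mulmC.
by apply: congr2 => //; apply: eq_bigl => k; rewrite !inE.
Qed.

Lemma index_enum_val (T : finType) (A : {pred T}) (j : 'I_#|A|) :
  index (enum_val j) (enum A) = j.
Proof.
rewrite (enum_val_nth (enum_val j)) index_uniq ?enum_uniq //.
by rewrite -cardE.
Qed.

Lemma bigfun_app {R : realType} {T : Type} (I : finType) (A : {pred I})
  (F : I -> T -> R) (x : T) :
  (\big[(fun f g y => f y + g y)/(fun _ => 0)]_(k in A) F k) x =
  \sum_(k in A) F k x.
Proof.
by rewrite (big_morph (fun f : T -> R => f x) (id1 := 0) (op1 := +%R)).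
Qed.

Definition wpart {R : realType} {d : nat} (CR : {set 'I_d})
  (w : 'I_#|~: CR|.+1 -> R) (k : 'I_d) : R :=
  w (inord (index k (enum (~: CR)))).

Lemma wpart_enum {R : realType} (d : nat) (CR : {set 'I_d})
  (w : 'I_#|~: CR|.+1 -> R) (j : 'I_#|~: CR|) :
  wpart CR w (enum_val j) = w (lift ord_max j).
Proof.
rewrite /wpart index_enum_val; congr w; apply: val_inj.
by rewrite /= inordK; [rewrite /bump leqNgt ltn_ord | apply: (leq_trans (ltn_ord j))].
Qed.


Definition pp {R : realType} (a y : R) := `|a - y| * (if a < y then 1 else 0).

Lemma ppE {R : realType} (a y : R) : pp a y = Num.max (y - a) 0.
Proof.
rewrite /pp; case: ltP => ay.
  by rewrite mulr1 distrC ger0_norm ?subr_ge0 ?ltW // max_l // subr_ge0 ltW.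
by rewrite mulr0 max_r // subr_le0.
Qed.

Lemma pp_ge0 {R : realType} (a y : R) : 0 <= pp a y.
Proof. by rewrite ppE le_max lexx orbT. Qed.

Lemma pp_sum {R : realType} (I : finType) (A : {pred I}) (a y : I -> R) :
  pp (\sum_(k in A) a k) (\sum_(k in A) y k) <= \sum_(k in A) pp (a k) (y k).
Proof.
rewrite ppE ge_max; apply/andP; split.
  rewrite -sumrB; apply: ler_sum => k _; rewrite ppE le_max lexx //.
by apply: sumr_ge0 => k _; apply: pp_ge0.
Qed.

Lemma pp_anti {R : realType} (a b y : R) : a <= b -> pp b y <= pp a y.
Proof.
move=> ab; rewrite !ppE ge_max !le_max lexx !orbT andbT.
by rewrite lerD2l lerN2 ab.
Qed.

Section Main.
Context (R : realType) (dT : measure_display) (T : measurableType dT)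
  (P : probability T R) (d : nat) (X : 'I_d -> T -> R) (u : R)
  (CR : {set 'I_d}).
Hypothesis mX : forall k, measurable_fun setT (X k).
Hypothesis X0 : forall k x, 0 <= X k x.

Definition SX x := \sum_(l < d) X l x.
Definition ind x : R := if SX x <= u then 1 else 0.
Definition term (a : R) (Z : T -> R) : \bar R :=
  (\int[P]_x (pp a (Z x) * ind x)%:E)%E.

Lemma mSX : measurable_fun setT SX.
Proof. exact: measurable_sum. Qed.

Lemma ind_ge0 x : 0 <= ind x.
Proof. by rewrite /ind; case: ifP. Qed.

Lemma mif (f : T -> bool) : measurable_fun setT f ->
  measurable_fun setT (fun x => if f x then (1:R) else 0).
Proof.
move=> mf; apply: measurable_fun_if => //.
Qed.

Lemma mterm (a : R) (Z : T -> R) : measurable_fun setT Z ->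
  measurable_fun setT (fun x => ((pp a (Z x) * ind x)%:E)).
Proof.
move=> mZ; apply/measurable_EFinP; apply: measurable_funM.
  rewrite /pp; apply: measurable_funM.
    apply: measurableT_comp => //; apply: measurable_funB => //.
  by apply: mif; exact: measurable_fun_ltr.
by rewrite /ind; apply: mif; apply: measurable_fun_ler => //; exact: mSX.
Qed.

Lemma term_ge0 a Z : (0 <= term a Z)%E.
Proof. by apply: integral_ge0 => x _; rewrite lee_fin mulr_ge0 // ?pp_ge0 ?ind_ge0. Qed.

Lemma term_anti a b Z : measurable_fun setT Z -> a <= b -> (term b Z <= term a Z)%E.
Proof.
move=> mZ ab; apply: ge0_le_integral => //.
- by move=> x _; rewrite lee_fin mulr_ge0 // ?pp_ge0 ?ind_ge0.
- exact: mterm.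
- exact: mterm.
by move=> x _; rewrite lee_fin ler_wpM2r ?ind_ge0 // pp_anti.
Qed.

Lemma term_sum (I : finType) (A : {pred I}) (a : I -> R) (Y : I -> T -> R) :
  (forall k, measurable_fun setT (Y k)) ->
  (\sum_(k in A) term (a k) (Y k) =
   \int[P]_x ((\sum_(k in A) pp (a k) (Y k x)) * ind x)%:E)%E.
Proof.
move=> mY; rewrite -big_enum /term -ge0_integral_sum //.
- apply: eq_integral => x _; rewrite sumEFin big_enum mulr_suml //.
- by move=> k; apply: mterm.
by move=> k x _; rewrite lee_fin mulr_ge0 // ?pp_ge0 ?ind_ge0.
Qed.


Definition Y := aggr (fun f g x => f x + g x) (fun _ => 0) CR X.
Definition ZC x := \sum_(k in CR) X k x.

Lemma msum (I : finType) (A : {pred I}) (f : I -> T -> R) :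
  (forall k, measurable_fun setT (f k)) ->
  measurable_fun setT (fun x => \sum_(k in A) f k x).
Proof.
move=> mf; rewrite (_ : (fun x => _) = fun x => \sum_(k <- index_enum I)
  (if k \in A then f k x else 0)); last by apply/funext => x; rewrite big_mkcond.
apply: measurable_sum => k; case: (k \in A); [exact: mf | exact: measurable_cst].
Qed.

Lemma mZC : measurable_fun setT ZC.
Proof. exact: msum. Qed.

Lemma SY x : \sum_(l < #|~: CR|.+1) Y l x = SX x.
Proof.
rewrite big_ord_lift /Y aggr_max bigfun_app.
under eq_bigr do rewrite aggr_lift.
by rewrite /SX (big_split_CR _ _ CR).
Qed.

Lemma IfunX v : Ifun P (@gabs R d) X u v =
  (\sum_(j < #|~: CR|) term (v (enum_val j)) (X (enum_val j)) +
   \sum_(k in CR) term (v k) (X k))%E.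
Proof. by rewrite -(big_split_CR _ _ CR). Qed.

Lemma IfunY w : Ifun P (@gabs R _) Y u w =
  (\sum_(j < #|~: CR|) term (w (lift ord_max j)) (X (enum_val j)) +
   term (w ord_max) ZC)%E.
Proof.
rewrite /Ifun big_ord_lift; apply: congr2.
  apply: eq_bigr => j _; rewrite /term; apply: eq_integral => x _.
  by rewrite /Y aggr_lift /ind -SY /Y /gabs.
rewrite /term; apply: eq_integral => x _.
by rewrite /Y aggr_max bigfun_app /ind -SY /Y /gabs.
Qed.

Lemma K1 (a : 'I_d -> R) :
  (term (\sum_(k in CR) a k) ZC <= \sum_(k in CR) term (a k) (X k))%E.
Proof.
rewrite term_sum // /term; apply: ge0_le_integral => //.
- by move=> x _; rewrite lee_fin mulr_ge0 // ?pp_ge0 ?ind_ge0.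
- exact: (mterm _ _ mZC).
- apply/measurable_EFinP; apply: measurable_funM; last first.
    rewrite /ind; apply: mif; apply: measurable_fun_ler => //; exact: mSX.
  apply: msum => k; rewrite /pp; apply: measurable_funM.
    apply: measurableT_comp => //; apply: measurable_funB => //.
  by apply: mif; exact: measurable_fun_ltr.
by move=> x _; rewrite lee_fin ler_wpM2r ?ind_ge0 // pp_sum.
Qed.


Hypothesis u0 : 0 <= u.

Lemma le_SX k x : X k x <= SX x.
Proof.
rewrite /SX (bigD1 k) //= lerDl; apply: sumr_ge0 => l _; exact: X0.
Qed.

Definition Et (t : 'I_d -> R) := [set x | forall k, k \in CR -> X k x <= t k].

Lemma mEt t : measurable (Et t).
Proof.
pose f x := \sum_(k in CR) Num.max (X k x - t k) 0.
have mf : measurable_fun setT f.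
  apply: msum => k; apply: measurable_maxr; last exact: measurable_cst.
  by apply: measurable_funB => //; exact: measurable_cst.
suff -> : Et t = f @^-1` `]-oo, 0]%classic.
  by rewrite -[X in measurable X]setTI; apply: mf => //; exact: measurable_itv.
apply/seteqP; split => x /=.
  move=> h; rewrite in_itv /= /f big1 // => k kC; apply/max_r; rewrite subr_le0.
  exact: h.
rewrite in_itv /= /f => h k kC.
have h0 : \sum_(k in CR) Num.max (X k x - t k) 0 = 0.
  apply/eqP; rewrite eq_le h /=; apply: sumr_ge0 => l _; by rewrite le_max lexx orbT.
have gem l : 0 <= Num.max (X l x - t l) 0 by rewrite le_max lexx orbT.
have := psumr_eq0P (fun l _ => gem l) h0 kC.
by move/eqP; rewrite eq_le ge_max subr_le0 => /andP[/andP[]].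
Qed.


Lemma K2 (s : R) : 0 <= s <= u -> (0 < #|CR|)%N -> comonotonic P CR X ->
  exists vC : 'I_d -> R, (forall k, 0 <= vC k <= u) /\
    \sum_(k in CR) vC k = s /\
    (\sum_(k in CR) term (vC k) (X k) <= term s ZC)%E.
Proof.
move=> hs Cn0 [d' [T' [P' [W [phi [mW [hom hE]]]]]]].
pose delta k w := clamp u (phi k w).
have [v [vb [vs vcmp]]] := @split_exists R d CR delta u s
   (fun k kC a b ab => clamp_homo u (hom k kC a b ab))
   (fun k w => clamp_bnd (phi k w) u0) Cn0 hs.
exists v; split => //; split => //.
pose E't (t : 'I_d -> R) := [set y | forall k, k \in CR -> phi k (W y) <= t k].
have hE' t : P (Et t) = P' (E't t) := hE t.
pose t1 (j : 'I_d) (n : nat) := fun k => if k == j then v j - n.+1%:R^-1 else u.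
pose t2 (i j : 'I_d) (n : nat) := fun k => if k == i then v i else t1 j n k.
pose F (i j : 'I_d) (n : nat) := if (i \in CR) && (j \in CR) && (i != j)
  then Et (t1 j n) `\` Et (t2 i j n) else set0.
have nF i j n : P.-negligible (F i j n).
  rewrite /F; case: ifP => [/andP[/andP[iC jC] ij]|_]; last exact: negligible_set0.
  have npos : 0 < n.+1%:R^-1 :> R by rewrite invr_gt0 ltr0n.
  case: (ltP (v j - n.+1%:R^-1) 0) => b0.
    apply: (negligibleS _ (negligible_set0 P)) => x [hx _].
    have := hx j jC; rewrite /t1 eqxx => h; have := X0 j x => ?; exfalso.
    move: h b0 npos; generalize (n.+1%:R^-1 : R) => e; lra.
  have mF : measurable (Et (t1 j n) `\` Et (t2 i j n)).
    by apply: measurableD; exact: mEt.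
  apply/(negligibleP _ mF).
  have vi := vb i.
  have sub21 : Et (t2 i j n) `<=` Et (t1 j n).
    move=> x hx k kC; have := hx k kC; rewrite /t2; case: eqP => [->|_] //.
    rewrite /t1 (negbTE ij) => h; apply: le_trans h _; by case/andP: vi.
  have eqE : E't (t1 j n) = E't (t2 i j n).
    apply/seteqP; split => y hy k kC; last first.
      have := hy k kC; rewrite /t2; case: eqP => [->|_] //.
      rewrite /t1 (negbTE ij) => h; apply: le_trans h _; by case/andP: vi.
    rewrite /t2; case: eqP => [->|_]; last exact: hy.
    rewrite leNgt; apply/negP => hvi.
    have hi := hy i iC; rewrite /t1 (negbTE ij) in hi.
    have hj := hy j jC; rewrite /t1 eqxx in hj.
    case: (vcmp (W y)) => h.
      have := h i iC; rewrite /delta clamp_id //; last by case/andP: vi => ? ?; lra.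
      lra.
    have := h j jC; have := clamp_le u b0 hj; rewrite -/(delta j (W y)).
    move: npos; generalize (n.+1%:R^-1 : R) => e; lra.
  have eq12 : P (Et (t1 j n)) = P (Et (t2 i j n)) by rewrite !hE' eqE.
  rewrite measureD //; try exact: mEt.
    rewrite (setIidr sub21).
    transitivity (P (Et (t2 i j n)) - P (Et (t2 i j n)))%E; first by congr (_ - _)%E.
    by rewrite subee //; exact: fin_num_measure (mEt _).
  exact: (le_lt_trans (probability_le1 P (mEt _))) (ltry _).
rewrite term_sum // /term.
pose G (N : nat) : set T :=
  if @unpickle ('I_d * 'I_d * nat)%type N is Some p then F p.1.1 p.1.2 p.2
  else set0.
have nN : P.-negligible (\bigcup_N G N).
  apply: negligible_bigcup => N; rewrite /G.
  case: unpickle => [[[i j] n]|]; [exact: nF | exact: negligible_set0].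
apply: ae_ge0_le_integral => //.
- move=> x _; rewrite lee_fin mulr_ge0 ?ind_ge0 //.
  by apply: sumr_ge0 => k _; apply: pp_ge0.
- apply/measurable_EFinP; apply: measurable_funM; last first.
    rewrite /ind; apply: mif; apply: measurable_fun_ler => //; exact: mSX.
  apply: msum => k; rewrite /pp; apply: measurable_funM.
    apply: measurableT_comp => //; apply: measurable_funB => //.
  by apply: mif; exact: measurable_fun_ltr.
- by move=> x _; rewrite lee_fin mulr_ge0 ?ind_ge0 ?pp_ge0.
- exact: (mterm _ _ mZC).
apply: (negligibleS _ nN) => x /= hx.
have hlt : ~ (((\sum_(k in CR) pp (v k) (X k x)) * ind x)%:E <=
  (pp s (ZC x) * ind x)%:E)%E by move=> h; apply: hx.
move: hlt; rewrite lee_fin => hlt.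
have indx : ind x = 1.
  move: hlt; rewrite /ind; case: ifP => // _; by rewrite !mulr0 lexx.
have SXu : SX x <= u.
  by move: indx; rewrite /ind; case: ifP => // _ /eqP; rewrite eq_sym oner_eq0.
rewrite indx !mulr1 in hlt.
have [a aC va] : exists2 a, a \in CR & v a < X a x.
  case: (pselect (exists2 a, a \in CR & v a < X a x)) => // na; exfalso; apply: hlt.
  rewrite big1; first exact: pp_ge0.
  move=> k kC; rewrite ppE max_r // subr_le0 leNgt; apply/negP => h; apply: na.
  by exists k.
have [b bC vb'] : exists2 b, b \in CR & X b x < v b.
  case: (pselect (exists2 b, b \in CR & X b x < v b)) => // nb; exfalso; apply: hlt.
  have -> : \sum_(k in CR) pp (v k) (X k x) = ZC x - s.
    rewrite -vs /ZC -sumrB; apply: eq_bigr => k kC; rewrite ppE max_l // subr_ge0.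
    rewrite leNgt; apply/negP => h; apply: nb; by exists k.
  by rewrite ppE le_max lexx.
have ab : a != b by apply/eqP => eab; rewrite eab in va; lra.
pose e := v b - X b x.
have e0 : 0 < e by rewrite subr_gt0.
pose n := Num.trunc (e^-1).
have hn : n.+1%:R^-1 < e.
  rewrite -[e in _ < e]invrK ltf_pV2 ?posrE ?invr_gt0 ?ltr0n //; exact: truncnS_gt.
exists (pickle (a, b, n)) => //.
rewrite /G pickleK /= /F aC bC ab /=.
split.
  move=> k kC; rewrite /t1; case: eqP => [->|_].
    by rewrite lerBrDr addrC -lerBrDr; exact: ltW.
  exact: le_trans (le_SX k x) SXu.
by move=> h; have := h a aC; rewrite /t2 eqxx; lra.
Qed.


Lemma combine (w : 'I_#|~: CR|.+1 -> R) (vC : 'I_d -> R) :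
  simplexU u w -> (forall k, 0 <= vC k <= u) ->
  \sum_(k in CR) vC k = w ord_max ->
  (\sum_(k in CR) term (vC k) (X k) <= term (w ord_max) ZC)%E ->
  exists v, simplexU u v /\
    (Ifun P (@gabs R d) X u v <= Ifun P (@gabs R _) Y u w)%E.
Proof.
move=> [wb ws] vb vs hle.
pose v k := if k \in CR then vC k else wpart CR w k.
have vE j : v (enum_val j) = w (lift ord_max j).
  have := enum_valP j; rewrite inE /v => /negbTE ->; exact: wpart_enum.
have vCR k : k \in CR -> v k = vC k by rewrite /v => ->.
exists v; split.
  split.
    by move=> k; rewrite /v; case: ifP => _ //; rewrite /wpart; apply: wb.
  rewrite (big_split_CR _ _ CR) (eq_bigr _ (fun j _ => vE j)).
  rewrite (eq_bigr _ vCR) vs -ws big_ord_lift //.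
rewrite IfunX IfunY (eq_bigr _ (fun j _ => congr1 (fun a => term a _) (vE j))).
rewrite (eq_bigr _ (fun k kC => congr1 (fun a => term a (X k)) (vCR k kC))).
exact: leeD2l.
Qed.


Lemma exists_v (w : 'I_#|~: CR|.+1 -> R) (uvec : 'I_d -> R) :
  simplexU u w -> simplexU u uvec -> comonotonic P CR X ->
  exists v, simplexU u v /\
    (Ifun P (@gabs R d) X u v <= Ifun P (@gabs R _) Y u w)%E.
Proof.
move=> wsim usim como; have [wb ws] := wsim; have [ub us] := usim.
have hs := wb ord_max.
case: (posnP #|CR|) => [C0|Cn0]; last first.
  have [vC [vb [vs hle]]] := K2 (w ord_max) hs Cn0 como.
  exact: (@combine w vC wsim vb vs hle).
have CR0 k : (k \in CR) = false.
  by apply/negbTE/negP => kC; move: C0; rewrite (cardD1 k) kC.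
have sumCR (V : Type) (idx : V) (op : Monoid.com_law idx) (F : 'I_d -> V) :
  \big[op/idx]_(k in CR) F k = idx by rewrite big_pred0.
case: (eqVneq (w ord_max) 0) => [s0|sn0].
  apply: (@combine w (fun _ => 0)) => //.
  - by move=> k; rewrite lexx u0.
  - by rewrite sumCR s0.
  - by rewrite sumCR term_ge0.
have dpos : (0 < #|~: CR|)%N.
  rewrite lt0n; apply/negP => /eqP c0.
  move: ws; rewrite big_ord_lift.
  have -> : \sum_(j < #|~: CR|) w (lift ord_max j) = 0.
    rewrite big1 // => j _; exfalso.
    by move: (ltn_ord j); move: (#|~: CR|) c0 j => n -> j; rewrite ltn0.
  move: us; rewrite (big_split_CR _ _ CR) sumCR big1; last first.
    move=> j _; exfalso.
    by move: (ltn_ord j); move: (#|~: CR|) c0 j => n -> j; rewrite ltn0.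
  move=> h1 h2; move/eqP: sn0; apply; move: h1 h2 => /= h1 h2; lra.
pose j0 : 'I_#|~: CR| := Ordinal dpos.
pose k0 := enum_val j0.
pose v k := wpart CR w k + (if k == k0 then w ord_max else 0).
have vE j : v (enum_val j) = w (lift ord_max j) + (if j == j0 then w ord_max else 0).
  by rewrite /v wpart_enum /k0 (inj_eq enum_val_inj).
have hsum : \sum_(j < #|~: CR|) w (lift ord_max j) + w ord_max = u.
  by rewrite -ws big_ord_lift.
have wl0 j : 0 <= w (lift ord_max j) by case/andP: (wb (lift ord_max j)).
exists v; split.
  split.
    move=> k; rewrite /v; case: eqP => [->|_]; last first.
      by rewrite addr0 /wpart; apply: wb.
    rewrite /k0 wpart_enum; apply/andP; split.
      by apply: addr_ge0 => //; case/andP: hs.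
    rewrite -hsum lerD2r (bigD1 j0) //= lerDl.
    by apply: sumr_ge0 => j _.
  rewrite (big_split_CR _ _ CR) sumCR /= addr0 (eq_bigr _ (fun j _ => vE j)).
  rewrite big_split /= -big_mkcond /= big_pred1_eq //.
rewrite IfunX IfunY sumCR adde0.
rewrite -[X in (X <= _)%E]adde0; apply: leeD; last exact: term_ge0.
apply: lee_sum => j _; rewrite vE; apply: term_anti => //.
by rewrite lerDl; case: eqP => _ //; case/andP: hs.
Qed.

Lemma main_sec (uvec : 'I_d -> R) :
  H1 P (@gabs R _) Y u -> comonotonic P CR X ->
  is_min_alloc P (@gabs R d) X u uvec ->
  is_min_alloc P (@gabs R _) Y u (aggr +%R 0 CR uvec) /\
  forall w, is_min_alloc P (@gabs R _) Y u w -> w = aggr +%R 0 CR uvec.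
Proof.
move=> [v0 [mv0 uniq]] como [usim umin].
have [ub us] := usim.
have hCR : 0 <= \sum_(k in CR) uvec k <= u.
  apply/andP; split; first by apply: sumr_ge0 => k _; case/andP: (ub k).
  rewrite -us (big_split_CR _ _ CR) lerDr; apply: sumr_ge0 => j _.
  by case/andP: (ub (enum_val j)).
have hmin : is_min_alloc P (@gabs R _) Y u (aggr +%R 0 CR uvec).
  split.
    split.
      move=> i; case: (unliftP ord_max i) => [j ->|->].
        by rewrite aggr_lift.
      by rewrite aggr_max.
    rewrite big_ord_lift aggr_max (eq_bigr _ (fun j _ => aggr_lift _ _ _ _ _ j)).
    by rewrite -us (big_split_CR _ _ CR).

  move=> w wsim.
  have [v [vsim hv]] := @exists_v w uvec wsim usim como.
  apply: le_trans hv; apply: le_trans (umin v vsim).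
  rewrite IfunY IfunX aggr_max (eq_bigr _ (fun j _ => congr1 (fun a => term a _)
     (aggr_lift +%R 0 _ CR uvec j))).
  by apply: leeD2l; exact: K1.
split => // w hw.
by rewrite (uniq w hw) (uniq _ hmin).
Qed.

End Main.

Theorem mainTheorem5 (R : realType) (dT : measure_display) (T : measurableType dT)
  (P : probability T R) (d : nat) (X : 'I_d -> T -> R) (u : R)
  (CR : {set 'I_d}) (uvec : 'I_d -> R) :
  0 <= u ->
  (forall k, measurable_fun setT (X k)) ->
  (forall k x, 0 <= X k x) ->
  (* (H1), (H2) for (X_1, ..., X_d) *)
  H1 P (@gabs R d) X u -> H2abs P X ->
  (* (H1), (H2) for the aggregated vector *)
  H1 P (@gabs R _) (aggr (fun f g x => f x + g x) (fun _ => 0) CR X) u ->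
  H2abs P (aggr (fun f g x => f x + g x) (fun _ => 0) CR X) ->
  comonotonic P CR X ->
  (* (u_1, ..., u_d) = A_{X_1,...,X_d}(u) *)
  is_min_alloc P (@gabs R d) X u uvec ->
  is_min_alloc P (@gabs R _) (aggr (fun f g x => f x + g x) (fun _ => 0) CR X) u
    (aggr +%R 0 CR uvec) /\
  forall w, is_min_alloc P (@gabs R _)
              (aggr (fun f g x => f x + g x) (fun _ => 0) CR X) u w ->
            w = aggr +%R 0 CR uvec.
Proof.
move=> u0 mX X0 _ _ H1Y _ como hmin.
exact: (@main_sec R dT T P d X u CR mX X0 u0 uvec H1Y como hmin).
Qed.
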